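(* Let $S$ be a nonempty subset of $\mathbb{N}^\times\setminus\{1\}$, and let $B$ be a unital C*-algebra generated by a family of isometries $\{S_n\}_{n\in S}$ and a unitary $U$ such that for all $n\in S$: $S_nU=U^nS_n$ and $\sum_{i=0}^{n-1}U^iS_nS_n^*U^{-i}=1_B$. Then $S_nS_m=S_mS_n$ for all $n,m\in S$ if and only if for all $n,m\in S$, $$S_n^*S_m=\sum_{\substack{0\le l\le nm-1\\ l\in n\mathbb{Z}\cap m\mathbb{Z}}}U^{l/n}S_mS_n^*U^{-l/m}.$$
   Context: $\mathbb{N}^\times$ denotes the multiplicative semigroup of positive integers. *)

(* Defs.v *)
From Stdlib Require Import Reals List Arith.
Import ListNotations.
Open Scope R_scope.

Definition C : Type := (R * R)%type.
Definition Cadd (a b : C) : C := (fst a + fst b, snd a + snd b).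
Definition Cmul (a b : C) : C :=
  (fst a * fst b - snd a * snd b, fst a * snd b + snd a * fst b).
Definition Cone : C := (1, 0).
Definition Cconj (a : C) : C := (fst a, - snd a).
Definition Cabs (a : C) : R := sqrt (fst a * fst a + snd a * snd a).

Record CStarAlgebra := {
  car :> Type;
  zero : car; one : car;
  add : car -> car -> car; opp : car -> car; mul : car -> car -> car;
  scal : C -> car -> car; star : car -> car; norm : car -> R;
  addA : forall x y z, add x (add y z) = add (add x y) z;
  addC : forall x y, add x y = add y x;
  add0x : forall x, add zero x = x;
  addNx : forall x, add (opp x) x = zero;
  mulA : forall x y z, mul x (mul y z) = mul (mul x y) z;
  mul1x : forall x, mul one x = x;
  mulx1 : forall x, mul x one = x;
  mulDl : forall x y z, mul (add x y) z = add (mul x z) (mul y z);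
  mulDr : forall x y z, mul x (add y z) = add (mul x y) (mul x z);
  scalA : forall a b x, scal (Cmul a b) x = scal a (scal b x);
  scal1 : forall x, scal Cone x = x;
  scalDl : forall a b x, scal (Cadd a b) x = add (scal a x) (scal b x);
  scalDr : forall a x y, scal a (add x y) = add (scal a x) (scal a y);
  scalMl : forall a x y, scal a (mul x y) = mul (scal a x) y;
  scalMr : forall a x y, scal a (mul x y) = mul x (scal a y);
  starK : forall x, star (star x) = x;
  starD : forall x y, star (add x y) = add (star x) (star y);
  starM : forall x y, star (mul x y) = mul (star y) (star x);
  starZ : forall a x, star (scal a x) = scal (Cconj a) (star x);
  norm_eq0 : forall x, norm x = 0 -> x = zero;
  normD : forall x y, norm (add x y) <= norm x + norm y;
  normZ : forall a x, norm (scal a x) = Cabs a * norm x;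
  normM : forall x y, norm (mul x y) <= norm x * norm y;
  normCstar : forall x, norm (mul (star x) x) = norm x * norm x;
  complete : forall u : nat -> car,
    (forall eps, 0 < eps -> exists N, forall j k, (N <= j)%nat -> (N <= k)%nat ->
        norm (add (u j) (opp (u k))) < eps) ->
    exists l, forall eps, 0 < eps -> exists N, forall k, (N <= k)%nat ->
        norm (add (u k) (opp l)) < eps
}.

Arguments zero {_}. Arguments one {_}. Arguments add {_}. Arguments opp {_}.
Arguments mul {_}. Arguments scal {_}. Arguments star {_}. Arguments norm {_}.

Section Ops.
Variable B : CStarAlgebra.

Fixpoint pw (x : B) (n : nat) : B :=
  match n with O => one | S k => mul x (pw x k) end.

Definition sumA (f : nat -> B) (s : list nat) : B :=
  fold_right (fun i acc => add (f i) acc) zero s.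

Definition isometry (s : B) : Prop := mul (star s) s = one.
Definition unitary (u : B) : Prop := mul (star u) u = one /\ mul u (star u) = one.

Definition converges (u : nat -> B) (l : B) : Prop :=
  forall eps, 0 < eps -> exists N, forall k, (N <= k)%nat ->
    norm (add (u k) (opp l)) < eps.

Definition cstar_subalgebra (P : B -> Prop) : Prop :=
  P zero /\ P one /\
  (forall x y, P x -> P y -> P (add x y)) /\
  (forall x, P x -> P (opp x)) /\
  (forall x y, P x -> P y -> P (mul x y)) /\
  (forall a x, P x -> P (scal a x)) /\
  (forall x, P x -> P (star x)) /\
  (forall u l, (forall k, P (u k)) -> converges u l -> P l).

Definition generated_by (U : B) (S : nat -> Prop) (Sg : nat -> B) : Prop :=
  forall P, cstar_subalgebra P -> P U -> (forall n, S n -> P (Sg n)) ->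
    forall x, P x.
End Ops.

Arguments pw {_}. Arguments sumA {_}. Arguments isometry {_}.
Arguments unitary {_}. Arguments generated_by {_}.

(* Main.v *)
Require Import Defs.
From Stdlib Require Import Reals List Arith Lra Lia FunctionalExtensionality Permutation ZArith.
Import ListNotations.
Open Scope R_scope.

Section Tool.
Context {B : CStarAlgebra}.
Implicit Types x y z : B.

Definition rs (r : R) (x : B) : B := scal (r, 0) x.
Definition sub x y : B := add x (opp y).

Lemma addx0 x : add x zero = x.
Proof. rewrite addC; apply add0x. Qed.
Lemma addxN x : add x (opp x) = zero.
Proof. rewrite addC; apply addNx. Qed.
Lemma add_cancel_l z x y : add z x = add z y -> x = y.
Proof.
  intro H. rewrite <- (add0x _ x), <- (add0x _ y), <- (addNx _ z), <- !addA, H; reflexivity.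
Qed.
Lemma opp_unique x y : add x y = zero -> y = opp x.
Proof. intro H. apply (add_cancel_l x). rewrite H, addxN; reflexivity. Qed.
Lemma oppK x : opp (opp x) = x.
Proof. symmetry; apply opp_unique. apply addNx. Qed.
Lemma oppD x y : opp (add x y) = add (opp x) (opp y).
Proof.
  symmetry; apply opp_unique.
  rewrite (addC _ (opp x)), addA, <- (addA _ x y), addxN, addx0, addxN; reflexivity.
Qed.
Lemma opp0 : opp (@zero B) = zero.
Proof. symmetry; apply opp_unique, addx0. Qed.
Lemma add_swap4 (a b c d : B) : add (add a b) (add c d) = add (add a c) (add b d).
Proof.
  rewrite <- !addA; f_equal. rewrite !addA; f_equal; apply addC.
Qed.
Lemma mulx0 x : mul x zero = zero.
Proof.
  apply (add_cancel_l (mul x zero)). rewrite <- mulDr, !addx0; reflexivity.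
Qed.
Lemma mul0x x : mul zero x = zero.
Proof.
  apply (add_cancel_l (mul zero x)). rewrite <- mulDl, !addx0; reflexivity.
Qed.
Lemma mulxN x y : mul x (opp y) = opp (mul x y).
Proof. apply opp_unique. rewrite <- mulDr, addxN, mulx0; reflexivity. Qed.
Lemma mulNx x y : mul (opp x) y = opp (mul x y).
Proof. apply opp_unique. rewrite <- mulDl, addxN, mul0x; reflexivity. Qed.
Lemma scalx0 a : scal a (@zero B) = zero.
Proof.
  apply (add_cancel_l (scal a zero)). rewrite <- scalDr, !addx0; reflexivity.
Qed.
Lemma scalN a x : scal a (opp x) = opp (scal a x).
Proof. apply opp_unique. rewrite <- scalDr, addxN, scalx0; reflexivity. Qed.

Lemma rs_add r s x : rs (r + s) x = add (rs r x) (rs s x).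
Proof.
  unfold rs. rewrite <- scalDl. unfold Cadd; simpl. f_equal; f_equal; ring.
Qed.
Lemma rs_mul r s x : rs r (rs s x) = rs (r * s) x.
Proof.
  unfold rs. rewrite <- scalA. unfold Cmul; simpl. f_equal; f_equal; ring.
Qed.
Lemma rs1 x : rs 1 x = x.
Proof. apply scal1. Qed.
Lemma rs0 x : rs 0 x = zero.
Proof.
  apply (add_cancel_l (rs 0 x)). rewrite <- rs_add, Rplus_0_r, addx0; reflexivity.
Qed.
Lemma rsx0 r : rs r (@zero B) = zero.
Proof. apply scalx0. Qed.
Lemma rs_opp r x : rs (- r) x = opp (rs r x).
Proof. apply opp_unique. rewrite <- rs_add, Rplus_opp_r, rs0; reflexivity. Qed.
Lemma rsN r x : rs r (opp x) = opp (rs r x).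
Proof. apply scalN. Qed.
Lemma rsD r x y : rs r (add x y) = add (rs r x) (rs r y).
Proof. apply scalDr. Qed.
Lemma rsMl r x y : rs r (mul x y) = mul (rs r x) y.
Proof. apply scalMl. Qed.
Lemma rsMr r x y : rs r (mul x y) = mul x (rs r y).
Proof. apply scalMr. Qed.
Lemma opp_rs x : opp x = rs (-1) x.
Proof. replace (-1) with (- (1)) by ring. rewrite rs_opp, rs1; reflexivity. Qed.

Lemma norm_rs r x : norm (rs r x) = Rabs r * norm x.
Proof.
  unfold rs. rewrite normZ. unfold Cabs; simpl. f_equal.
  rewrite <- sqrt_Rsqr_abs. f_equal. unfold Rsqr; ring.
Qed.
Lemma norm_zero : norm (@zero B) = 0.
Proof. rewrite <- (rs0 zero), norm_rs, Rabs_R0; ring. Qed.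
Lemma norm_opp x : norm (opp x) = norm x.
Proof. rewrite opp_rs, norm_rs. replace (-1) with (- (1)) by ring. rewrite Rabs_Ropp, Rabs_R1; ring. Qed.
Lemma norm_ge0 x : 0 <= norm x.
Proof.
  pose proof (normD _ x (opp x)) as H. rewrite addxN, norm_zero, norm_opp in H. lra.
Qed.
Lemma norm_sub_le x y : norm x <= norm (add x y) + norm y.
Proof.
  pose proof (normD _ (add x y) (opp y)) as H.
  rewrite <- addA, addxN, addx0, norm_opp in H. exact H.
Qed.

Lemma star_one : star (@one B) = one.
Proof.
  transitivity (mul (star (@one B)) one). symmetry; apply mulx1.
  rewrite <- (starK _ (mul (star one) one)), starM, starK, mulx1, starK; reflexivity.
Qed.
Lemma norm_one_le1 : norm (@one B) <= 1.
Proof.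
  pose proof (normCstar B one) as H. rewrite star_one, mul1x in H.
  pose proof (norm_ge0 (@one B)).
  destruct (Req_dec (norm (@one B)) 0) as [E|E]. lra.
  assert (norm (@one B) = 1). { apply (Rmult_eq_reg_l (norm (@one B))); [|exact E]. lra. }
  lra.
Qed.
Lemma star_zero : star (@zero B) = zero.
Proof. rewrite <- (mulx0 (star zero)) at 1. rewrite starM, starK. apply mulx0. Qed.
Lemma star_opp x : star (opp x) = opp (star x).
Proof. apply opp_unique. rewrite <- starD, addxN, star_zero; reflexivity. Qed.
Lemma star_rs r x : star (rs r x) = rs r (star x).
Proof. unfold rs. rewrite starZ. unfold Cconj; simpl. rewrite Ropp_0; reflexivity. Qed.
Lemma norm_star_le x : norm (star x) <= norm x.
Proof.
  pose proof (normCstar _ (star x)) as H. rewrite starK in H.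
  pose proof (normM _ x (star x)) as H2. pose proof (norm_ge0 (star x)). pose proof (norm_ge0 x).
  destruct (Req_dec (norm (star x)) 0) as [E|E]. lra.
  assert (norm (star x) * norm (star x) <= norm x * norm (star x)) by lra.
  apply (Rmult_le_reg_r (norm (star x))); lra.
Qed.
Lemma norm_star x : norm (star x) = norm x.
Proof.
  apply Rle_antisym. apply norm_star_le. rewrite <- (starK _ x) at 1. apply norm_star_le.
Qed.
Lemma cstar_zero x : mul (star x) x = zero -> x = zero.
Proof.
  intro H. apply norm_eq0. pose proof (normCstar _ x) as E. rewrite H, norm_zero in E.
  nra.
Qed.
Lemma sa_sq_zero x : star x = x -> mul x x = zero -> x = zero.
Proof. intros Hs H. apply cstar_zero. rewrite Hs; exact H. Qed.

End Tool.

Section AC.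
Context {B : CStarAlgebra}.
Inductive tree := Leaf (x : B) | Node (a b : tree) | Zr.
Fixpoint den (t : tree) : B := match t with Leaf x => x | Node a b => add (den a) (den b) | Zr => zero end.
Fixpoint flat (t : tree) : list B := match t with Leaf x => x :: nil | Node a b => flat a ++ flat b | Zr => nil end.
Definition sumL (l : list B) : B := fold_right add zero l.
Lemma sumL_app l1 l2 : sumL (l1 ++ l2) = add (sumL l1) (sumL l2).
Proof. induction l1; simpl. rewrite add0x; reflexivity. rewrite IHl1, addA; reflexivity. Qed.
Lemma den_flat t : den t = sumL (flat t).
Proof. induction t; simpl. rewrite addx0; reflexivity. rewrite sumL_app, IHt1, IHt2; reflexivity. reflexivity. Qed.
Lemma sumL_perm l1 l2 : Permutation l1 l2 -> sumL l1 = sumL l2.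
Proof.
  induction 1; simpl; auto. rewrite IHPermutation; reflexivity.
  rewrite !addA, (addC _ y); reflexivity. congruence.
Qed.
End AC.

Ltac reify t := match t with
  | add ?a ?b => let ra := reify a in let rb := reify b in constr:(Node ra rb)
  | @zero _ => constr:(Zr)
  | _ => constr:(Leaf t) end.
Ltac split_at a L := match L with
  | a :: ?r => let T := type of a in constr:((@nil T, r))
  | ?b :: ?r => let p := split_at a r in
      match p with (?x, ?y) => constr:((b :: x, y)) end
  end.
Ltac perm := match goal with
  | |- Permutation nil nil => apply perm_nil
  | |- Permutation (?a :: ?l1) ?l2 =>
      let p := split_at a l2 in
      match p with (?x, ?y) => change l2 with (x ++ a :: y); apply Permutation_cons_app; cbn [app]; perm end
  end.
Ltac ac_eq := match goal with
  | |- ?x = ?y =>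
    let rx := reify x in let ry := reify y in
    change (den rx = den ry); rewrite !den_flat; apply sumL_perm; cbn [flat app]; perm
  end.

Section LemA.
Variable B : CStarAlgebra.
Variables u v : B.

Fixpoint Tw (N : nat) (g : R -> R) : B :=
  match N with
  | O => rs (g 0) one
  | S N' => add (mul (Tw N' (fun d => g (d + 1))) u) (mul (Tw N' (fun d => g (d - 1))) v)
  end.
Fixpoint Mw (N : nat) (g : R -> R) : R :=
  match N with
  | O => g 0
  | S N' => (Mw N' (fun d => g (d + 1)) + Mw N' (fun d => g (d - 1))) / 2
  end.

Lemma Tw_lin N : forall g1 g2 a b,
  Tw N (fun d => a * g1 d + b * g2 d) = add (rs a (Tw N g1)) (rs b (Tw N g2)).
Proof.
  induction N as [|N IH]; intros g1 g2 a b; simpl.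
  - rewrite rs_add, <- !rs_mul; reflexivity.
  - rewrite (IH (fun d => g1 (d+1)) (fun d => g2 (d+1))),
            (IH (fun d => g1 (d-1)) (fun d => g2 (d-1))).
    rewrite !mulDl, !rsD, <- !rsMl. apply add_swap4.
Qed.

Lemma Mw_lin N : forall g1 g2 a b,
  Mw N (fun d => a * g1 d + b * g2 d) = a * Mw N g1 + b * Mw N g2.
Proof.
  induction N as [|N IH]; intros g1 g2 a b; simpl. reflexivity.
  rewrite (IH (fun d => g1 (d+1)) (fun d => g2 (d+1))),
          (IH (fun d => g1 (d-1)) (fun d => g2 (d-1))). field.
Qed.

Hypothesis Huv : add u v = one.
Hypothesis Hu : norm u <= / 2.
Hypothesis Hv : norm v <= / 2.

Lemma Tw_bound N : forall g, (forall d, 0 <= g d) -> norm (Tw N g) <= Mw N g.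
Proof.
  induction N as [|N IH]; intros g Hg; simpl.
  - rewrite norm_rs, Rabs_pos_eq by apply Hg.
    pose proof (@norm_one_le1 B). pose proof (norm_ge0 (@one B)). specialize (Hg 0). nra.
  - pose proof (IH (fun d => g (d+1)) (fun d => Hg _)).
    pose proof (IH (fun d => g (d-1)) (fun d => Hg _)).
    pose proof (normD _ (mul (Tw N (fun d => g (d + 1))) u) (mul (Tw N (fun d => g (d - 1))) v)).
    pose proof (normM _ (Tw N (fun d => g (d + 1))) u).
    pose proof (normM _ (Tw N (fun d => g (d - 1))) v).
    pose proof (norm_ge0 (Tw N (fun d => g (d + 1)))).
    pose proof (norm_ge0 (Tw N (fun d => g (d - 1)))).
    pose proof (norm_ge0 u). pose proof (norm_ge0 v).
    assert (norm (Tw N (fun d => g (d + 1))) * norm u <= Mw N (fun d => g (d + 1)) * / 2)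
      by (apply Rmult_le_compat; lra).
    assert (norm (Tw N (fun d => g (d - 1))) * norm v <= Mw N (fun d => g (d - 1)) * / 2)
      by (apply Rmult_le_compat; lra).
    lra.
Qed.

Definition e := add u (opp v).

Lemma Tw_one N : Tw N (fun _ => 1) = one.
Proof.
  induction N as [|N IH]; simpl. apply rs1.
  rewrite IH, !mul1x. exact Huv.
Qed.

Lemma Tw_id N : Tw N (fun d => d) = rs (INR N) e.
Proof.
  induction N as [|N IH]; cbn [Tw]; try change (INR 0) with 0.
  - rewrite !rs0; reflexivity.
  - replace (fun d => d + 1) with (fun d : R => 1 * d + 1 * 1) by (apply functional_extensionality; intro; ring).
    replace (fun d => d - 1) with (fun d : R => 1 * d + (-1) * 1) by (apply functional_extensionality; intro; ring).
    rewrite !Tw_lin, IH, Tw_one, !rs1, !mulDl, <- !rsMl, !mul1x, <- opp_rs.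
    rewrite add_swap4, <- !rsD, <- !mulDr, Huv, mulx1.
    rewrite S_INR, rs_add, rs1. reflexivity.
Qed.

Lemma Tw_sq N : Tw N (fun d => d * d) = add (rs (INR N) one) (rs (INR N * (INR N - 1)) (mul e e)).
Proof.
  induction N as [|N IH]; cbn [Tw]; try change (INR 0) with 0.
  - rewrite !Rmult_0_l, !rs0, addx0; reflexivity.
  - replace (fun d => (d + 1) * (d + 1)) with (fun d : R => 1 * (d * d) + 1 * (2 * d + 1 * 1))
      by (apply functional_extensionality; intro; ring).
    replace (fun d => (d - 1) * (d - 1)) with (fun d : R => 1 * (d * d) + 1 * ((-2) * d + 1 * 1))
      by (apply functional_extensionality; intro; ring).
    rewrite !Tw_lin, IH, Tw_id, Tw_one, !rs1, rs_mul, rs_mul.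
    set (S0 := add (rs (INR N) one) (rs (INR N * (INR N - 1)) (mul e e))).
    rewrite !mulDl, mul1x.
    transitivity (add (add (mul S0 (add u v)) (add u v))
                      (add (mul (rs (2 * INR N) e) u) (mul (rs (-2 * INR N) e) v))).
    + rewrite !mulDr, mul1x. ac_eq.
    + rewrite Huv, mulx1.
      replace (-2 * INR N) with (- (2 * INR N)) by ring.
      rewrite rs_opp, mulNx, <- mulxN, <- mulDr, <- rsMl. fold e. unfold S0.
      rewrite S_INR, rs_add, rs1.
      replace ((INR N + 1) * (INR N + 1 - 1)) with (INR N * (INR N - 1) + 2 * INR N) by ring.
      rewrite rs_add. ac_eq.
Qed.

Lemma Mw_one N : Mw N (fun _ => 1) = 1.
Proof. induction N as [|N IH]; cbn [Mw]; try change (INR 0) with 0. reflexivity. rewrite IH; field. Qed.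
Lemma Mw_id N : Mw N (fun d => d) = 0.
Proof.
  induction N as [|N IH]; cbn [Mw]; try change (INR 0) with 0. reflexivity.
  replace (fun d => d + 1) with (fun d : R => 1 * d + 1 * 1) by (apply functional_extensionality; intro; ring).
  replace (fun d => d - 1) with (fun d : R => 1 * d + (-1) * 1) by (apply functional_extensionality; intro; ring).
  rewrite !Mw_lin, IH, Mw_one; field.
Qed.
Lemma Mw_sq N : Mw N (fun d => d * d) = INR N.
Proof.
  induction N as [|N IH]; cbn [Mw]; try change (INR 0) with 0. ring.
  replace (fun d => (d + 1) * (d + 1)) with (fun d : R => 1 * (d * d) + 1 * (2 * d + 1 * 1))
      by (apply functional_extensionality; intro; ring).
  replace (fun d => (d - 1) * (d - 1)) with (fun d : R => 1 * (d * d) + 1 * ((-2) * d + 1 * 1))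
      by (apply functional_extensionality; intro; ring).
  rewrite !Mw_lin, IH, Mw_id, Mw_one, S_INR. field.
Qed.

Lemma lemA : mul e e = zero.
Proof.
  apply norm_eq0.
  pose proof (norm_ge0 (mul e e)) as H0.
  destruct (Rle_lt_or_eq_dec 0 _ H0) as [Hp|Hz]; [|auto].
  exfalso.
  destruct (archimed (2 / norm (mul e e) + 1)) as [Ha _].
  set (k := up (2 / norm (mul e e) + 1)) in *.
  assert (Hk : (0 < k)%Z). { apply lt_IZR. assert (0 < 2 / norm (mul e e)) by (apply Rdiv_lt_0_compat; lra). lra. }
  set (N := Z.to_nat k).
  assert (HN : INR N = IZR k). { unfold N. rewrite INR_IZR_INZ, Z2Nat.id by lia. reflexivity. }
  pose proof (Tw_bound N (fun d => d * d) (fun d => Rle_0_sqr d)) as Hb.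
  rewrite Tw_sq, Mw_sq in Hb.
  pose proof (norm_sub_le (rs (INR N * (INR N - 1)) (mul e e)) (rs (INR N) one)) as H1.
  rewrite addC in H1. rewrite !norm_rs in H1.
  pose proof (@norm_one_le1 B). pose proof (norm_ge0 (@one B)).
  assert (HN1 : 2 / norm (mul e e) + 1 < INR N) by lra.
  assert (HN0 : 1 < INR N). { assert (0 < 2 / norm (mul e e)) by (apply Rdiv_lt_0_compat; lra). lra. }
  rewrite (Rabs_pos_eq (INR N)) in H1 by lra.
  rewrite Rabs_pos_eq in H1 by nra.
  assert (INR N * (INR N - 1) * norm (mul e e) <= 2 * INR N) by nra.
  assert ((INR N - 1) * norm (mul e e) <= 2) by nra.
  assert (2 < (INR N - 1) * norm (mul e e)).
  { assert (2 / norm (mul e e) < INR N - 1) by lra.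
    apply (Rmult_lt_compat_r (norm (mul e e))) in H5; [|lra].
    unfold Rdiv in H5. rewrite Rmult_assoc, Rinv_l in H5 by lra. lra. }
  lra.
Qed.
End LemA.

Section LemE.
Context {B : CStarAlgebra}.

Lemma lemE (M : R) (x : B) : 0 < M ->
  norm (add (rs M one) (opp x)) <= M -> norm (add (rs M one) x) <= M -> mul x x = zero.
Proof.
  intros HM H1 H2.
  set (c := / (2 * M)).
  assert (Hc : 0 < c) by (unfold c; apply Rinv_0_lt_compat; lra).
  set (u := rs c (add (rs M one) x)). set (v := rs c (add (rs M one) (opp x))).
  assert (Huv : add u v = one).
  { unfold u, v. rewrite <- rsD.
    transitivity (rs c (add (add (rs M one) (rs M one)) (add x (opp x)))). f_equal; ac_eq.
    rewrite addxN, addx0, <- rs_add, rs_mul. unfold c. replace (/ (2 * M) * (M + M)) with 1 by (field; lra). apply rs1. }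
  assert (Hu : norm u <= / 2).
  { unfold u. rewrite norm_rs, Rabs_pos_eq by lra.
    replace (/2) with (c * M) by (unfold c; field; lra). apply Rmult_le_compat_l; lra. }
  assert (Hv : norm v <= / 2).
  { unfold v. rewrite norm_rs, Rabs_pos_eq by lra.
    replace (/2) with (c * M) by (unfold c; field; lra). apply Rmult_le_compat_l; lra. }
  pose proof (lemA _ u v Huv Hu Hv) as H. unfold e in H.
  assert (Ee : add u (opp v) = rs (/ M) x).
  { unfold u, v. rewrite <- rsN, <- rsD, oppD, oppK.
    transitivity (rs c (add (add (rs M one) (opp (rs M one))) (add x x))). f_equal; ac_eq.
    rewrite addxN, add0x. rewrite <- (rs1 x) at 1 2. rewrite <- rs_add, rs_mul.
    f_equal. unfold c; field; lra. }
  rewrite Ee, <- rsMl, <- rsMr, rs_mul in H.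
  rewrite <- (rs1 (mul x x)), <- (Rinv_l (/M * / M)), <- rs_mul, H, rsx0 by (apply Rgt_not_eq, Rmult_gt_0_compat; apply Rinv_0_lt_compat; lra).
  reflexivity.
Qed.

Lemma sum_bound (l : list B) : (forall y, In y l -> norm (add one (opp y)) <= 1) ->
  norm (add (rs (INR (length l)) one) (opp (sumL l))) <= INR (length l).
Proof.
  induction l as [|y l IH]; intro H; simpl length; simpl sumL.
  - change (INR 0) with 0. rewrite rs0, opp0, addx0, norm_zero. lra.
  - rewrite S_INR, rs_add, rs1, oppD.
    transitivity (norm (add (add one (opp y)) (add (rs (INR (length l)) one) (opp (fold_right add zero l))))).
    right; f_equal. unfold sumL. ac_eq.
    eapply Rle_trans. apply normD.
    pose proof (H y (or_introl eq_refl)). pose proof (IH (fun z Hz => H z (or_intror Hz))).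
    unfold sumL in *. lra.
Qed.

Lemma lemP (l : list B) : (forall y, In y l -> star y = y /\ norm (add one (opp y)) <= 1) ->
  sumL l = zero -> forall y, In y l -> y = zero.
Proof.
  induction l as [|x l IH]; intros H Hs y Hy; [destruct Hy|].
  simpl in Hs.
  assert (Hx : x = zero).
  { destruct (H x (or_introl eq_refl)) as [Hsa Hn].
    apply sa_sq_zero; [exact Hsa|].
    apply (lemE (INR (length l) + 1)). pose proof (pos_INR (length l)); lra.
    - rewrite rs_add, rs1.
      transitivity (norm (add (rs (INR (length l)) one) (add one (opp x)))). right; f_equal; ac_eq.
      eapply Rle_trans. apply normD. rewrite norm_rs, Rabs_pos_eq by apply pos_INR.
      pose proof (@norm_one_le1 B). pose proof (norm_ge0 (@one B)). pose proof (pos_INR (length l)). nra.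
    - assert (Ex : x = opp (sumL l)). { apply opp_unique. rewrite addC. exact Hs. }
      rewrite Ex, rs_add, rs1.
      transitivity (norm (add one (add (rs (INR (length l)) one) (opp (sumL l))))). right; f_equal; ac_eq.
      eapply Rle_trans. apply normD.
      pose proof (@norm_one_le1 B).
      pose proof (sum_bound l (fun z Hz => proj2 (H z (or_intror Hz)))). lra. }
  destruct Hy as [<-|Hy]; [exact Hx|].
  apply IH; auto. intros z Hz; apply H; right; exact Hz.
  rewrite Hx, add0x in Hs. exact Hs.
Qed.
End LemE.

Section Pw.
Context {B : CStarAlgebra}.
Implicit Types x y z : B.

Lemma pw_comm x k : mul (pw x k) x = mul x (pw x k).
Proof.
  induction k; simpl. rewrite mul1x, mulx1; reflexivity.
  rewrite <- mulA, IHk; reflexivity.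
Qed.
Lemma pw_add x a b : pw x (a + b) = mul (pw x a) (pw x b).
Proof. induction a; simpl. rewrite mul1x; reflexivity. rewrite IHa, mulA; reflexivity. Qed.
Lemma pw_star x k : star (pw x k) = pw (star x) k.
Proof.
  induction k; simpl. apply star_one.
  rewrite starM, IHk, pw_comm; reflexivity.
Qed.
Lemma pw_unit (u : B) k : mul u (star u) = one -> mul (pw u k) (pw (star u) k) = one.
Proof.
  intro H. induction k; simpl. apply mul1x.
  rewrite <- (pw_comm (star u)), <- !mulA, (mulA _ (pw u k)), IHk, mul1x. exact H.
Qed.

Lemma sumA_app (f : nat -> B) s1 s2 : sumA f (s1 ++ s2) = add (sumA f s1) (sumA f s2).
Proof. induction s1; simpl. rewrite add0x; reflexivity. rewrite IHs1, addA; reflexivity. Qed.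
Lemma sumA_ext (f g : nat -> B) s : (forall i, In i s -> f i = g i) -> sumA f s = sumA g s.
Proof.
  induction s; intro H; simpl. reflexivity.
  rewrite H by (left; reflexivity). rewrite IHs; auto. intros; apply H; right; auto.
Qed.
Lemma sumA_zero (f : nat -> B) s : (forall i, In i s -> f i = zero) -> sumA f s = zero.
Proof.
  induction s; intro H; simpl. reflexivity.
  rewrite H by (left; reflexivity). rewrite IHs, addx0; auto. intros; apply H; right; auto.
Qed.
Lemma mul_sumA_l x (f : nat -> B) s : mul x (sumA f s) = sumA (fun i => mul x (f i)) s.
Proof. induction s; simpl. apply mulx0. rewrite mulDr, IHs; reflexivity. Qed.
Lemma mul_sumA_r x (f : nat -> B) s : mul (sumA f s) x = sumA (fun i => mul (f i) x) s.
Proof. induction s; simpl. apply mul0x. rewrite mulDl, IHs; reflexivity. Qed.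
Lemma sumA_filter (f : nat -> B) p s :
  sumA f (filter p s) = sumA (fun i => if p i then f i else zero) s.
Proof.
  induction s; simpl. reflexivity.
  destruct (p a); simpl; rewrite IHs; [reflexivity|rewrite add0x; reflexivity].
Qed.
Lemma sumA_sumL (f : nat -> B) s : sumA f s = sumL (map f s).
Proof. induction s; simpl. reflexivity. rewrite IHs; reflexivity. Qed.

Lemma sumA_reindex (h : nat -> B) m k : (0 < m)%nat ->
  (forall l, l mod m <> 0%nat -> h l = zero) ->
  sumA h (seq 0 (k * m)) = sumA (fun j => h (m * j)%nat) (seq 0 k).
Proof.
  intros Hm Hh. induction k.
  - reflexivity.
  - rewrite Nat.mul_succ_l, seq_app, sumA_app, IHk, seq_S, sumA_app. f_equal.
    simpl. destruct m as [|m']; [lia|]. simpl seq. simpl sumA.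
    rewrite sumA_zero. rewrite Nat.mul_comm; reflexivity.
    intros i Hi. apply in_seq in Hi. apply Hh.
    replace i with ((i - k * S m') + k * S m')%nat by lia.
    rewrite Nat.Div0.mod_add, Nat.mod_small by lia. lia.
Qed.

Lemma proj_norm (P : B) : star P = P -> mul P P = P -> norm P <= 1.
Proof.
  intros Hs Hp. pose proof (normCstar _ P) as H. rewrite Hs, Hp in H.
  pose proof (norm_ge0 P). nra.
Qed.
End Pw.

Section Main.
Context {B : CStarAlgebra} (S : nat -> Prop) (Sg : nat -> B) (U : B).
Hypothesis HS1 : forall n, S n -> (2 <= n)%nat.
Hypothesis Hiso : forall n, S n -> isometry (Sg n).
Hypothesis HU : unitary U.
Hypothesis Hcov : forall n, S n -> mul (Sg n) U = mul (pw U n) (Sg n).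
Hypothesis Hsum : forall n, S n ->
     sumA (fun i => mul (mul (pw U i) (mul (Sg n) (star (Sg n)))) (pw (star U) i))
          (seq 0 n) = one.

Lemma cov_pow n k : S n -> mul (Sg n) (pw U k) = mul (pw U (n * k)) (Sg n).
Proof.
  intro Hn. induction k.
  - rewrite Nat.mul_0_r. simpl. rewrite mul1x, mulx1; reflexivity.
  - cbn [pw]. rewrite mulA, Hcov by exact Hn. rewrite <- mulA, IHk, mulA, <- pw_add.
    f_equal. f_equal. lia.
Qed.
Lemma cov' n k Y : S n -> mul (Sg n) (mul (pw U k) Y) = mul (pw U (n * k)) (mul (Sg n) Y).
Proof. intro Hn. rewrite mulA, cov_pow by exact Hn. rewrite mulA; reflexivity. Qed.

Lemma a_zero n r : S n -> (1 <= r < n)%nat -> mul (star (Sg n)) (mul (pw U r) (Sg n)) = zero.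
Proof.
  intros Hn Hr.
  set (T := Sg n).
  assert (HT : mul (star T) T = one) by (apply Hiso; exact Hn).
  assert (HU2 : mul U (star U) = one) by apply HU.
  set (a := fun i => mul (star T) (mul (pw U i) T)).
  set (g := fun i => mul (a i) (star (a i))).
  assert (Hg : forall i, mul (star T) (mul (mul (mul (pw U i) (mul T (star T))) (pw (star U) i)) T) = g i).
  { intro i. unfold g, a. rewrite !starM, starK, pw_star. rewrite <- !mulA. reflexivity. }
  assert (Hs : sumA g (seq 0 n) = one).
  { rewrite <- (sumA_ext _ _ _ (fun i _ => Hg i)), <- mul_sumA_l, <- mul_sumA_r.
    unfold T. rewrite Hsum by exact Hn. rewrite mul1x. exact HT. }
  destruct n as [|n']; [lia|]. simpl seq in Hs. cbn [sumA fold_right] in Hs.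
  assert (Hg0 : g 0%nat = one).
  { unfold g, a. simpl pw. rewrite mul1x, HT, star_one, mul1x; reflexivity. }
  fold (sumA g (seq 1 n')) in Hs. rewrite Hg0 in Hs.
  assert (Hs' : sumL (map g (seq 1 n')) = zero).
  { rewrite <- sumA_sumL. apply (add_cancel_l one). rewrite addx0. exact Hs. }
  assert (Hgr : g r = zero).
  { apply (lemP (map g (seq 1 n'))); [|exact Hs'|apply in_map, in_seq; lia].
    intros y Hy. apply in_map_iff in Hy. destruct Hy as [i [<- _]]. split.
    - unfold g. rewrite starM, starK; reflexivity.
    - set (W := mul (pw (star U) i) T).
      set (E := mul T (star T)).
      assert (HWs : star W = mul (star T) (pw U i)).
      { unfold W. rewrite starM, pw_star, starK; reflexivity. }
      assert (HWW : mul (star W) W = one).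
      { rewrite HWs. unfold W. rewrite <- !mulA, (mulA _ (pw U i)), pw_unit, mul1x by exact HU2. exact HT. }
      assert (Heq : mul (star W) (mul (add one (opp E)) W) = add one (opp (g i))).
      { rewrite mulDl, mul1x, mulNx, mulDr, mulxN, HWW. f_equal. f_equal.
        rewrite HWs. unfold g, a, W, E. rewrite !starM, starK, pw_star. rewrite <- !mulA. reflexivity. }
      rewrite <- Heq.
      assert (HP : norm (add one (opp E)) <= 1).
      { apply proj_norm.
        - rewrite starD, star_opp, star_one. unfold E. rewrite starM, starK; reflexivity.
        - rewrite mulDl, !mulDr, mul1x, mulx1, mulNx, !mulxN, oppK, !mul1x.
          assert (HEE : mul E E = E). { unfold E. rewrite <- mulA, (mulA _ (star T)), HT, mul1x; reflexivity. }
          rewrite HEE. transitivity (add (add one (opp E)) (add E (opp E))). ac_eq. rewrite addxN, addx0; reflexivity. }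
      assert (HWn : norm W <= 1).
      { pose proof (normCstar _ W) as H. rewrite HWW in H. pose proof (@norm_one_le1 B). pose proof (norm_ge0 W). nra. }
      pose proof (normM _ (star W) (mul (add one (opp E)) W)).
      pose proof (normM _ (add one (opp E)) W).
      rewrite norm_star in H.
      pose proof (norm_ge0 W). pose proof (norm_ge0 (add one (opp E))).
      pose proof (norm_ge0 (mul (add one (opp E)) W)).
      assert (norm (add one (opp E)) * norm W <= 1) by nra. nra. }
  unfold g in Hgr.
  assert (Has : star (a r) = zero).
  { apply cstar_zero. rewrite starK. exact Hgr. }
  change (a r = zero). rewrite <- (starK _ (a r)), Has. apply star_zero.
Qed.

Lemma Gform n k (Y : B) : S n ->
  mul (star (Sg n)) (mul (pw U k) (mul (Sg n) Y)) =
  if (k mod n =? 0)%nat then mul (pw U (k / n)) Y else zero.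
Proof.
  intro Hn. pose proof (HS1 n Hn) as H2.
  rewrite (Nat.div_mod_eq k n) at 1. rewrite Nat.add_comm, pw_add, <- mulA.
  rewrite <- cov' by exact Hn.
  rewrite (mulA _ (pw U (k mod n))), mulA.
  destruct (Nat.eqb_spec (k mod n) 0) as [E|E].
  - rewrite E. simpl pw. rewrite mul1x. rewrite (Hiso n Hn). apply mul1x.
  - rewrite a_zero; [apply mul0x|exact Hn|].
    pose proof (Nat.mod_upper_bound k n). lia.
Qed.
End Main.

Section Main2.
Context {B : CStarAlgebra} (S : nat -> Prop) (Sg : nat -> B) (U : B).
Hypothesis HS1 : forall n, S n -> (2 <= n)%nat.
Hypothesis Hiso : forall n, S n -> isometry (Sg n).
Hypothesis HU : unitary U.
Hypothesis Hcov : forall n, S n -> mul (Sg n) U = mul (pw U n) (Sg n).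
Hypothesis Hsum : forall n, S n ->
     sumA (fun i => mul (mul (pw U i) (mul (Sg n) (star (Sg n)))) (pw (star U) i))
          (seq 0 n) = one.

Definition RHS n m := sumA (fun l => mul (mul (pw U (l / n)) (mul (Sg m) (star (Sg n))))
                        (pw (star U) (l / m)))
          (filter (fun l => andb (Nat.eqb (l mod n) 0) (Nat.eqb (l mod m) 0))
                  (seq 0 (n * m))).

Lemma dir1 n m : S n -> S m -> mul (Sg n) (Sg m) = mul (Sg m) (Sg n) ->
  mul (star (Sg n)) (Sg m) = RHS n m.
Proof.
  intros Hn Hm Hc. pose proof (HS1 n Hn). pose proof (HS1 m Hm).
  unfold RHS. rewrite sumA_filter.
  rewrite (sumA_reindex _ m n); [| lia |].
  2:{ intros l Hl. destruct (Nat.eqb_spec (l mod m) 0) as [E|E]; [contradiction|].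
      rewrite Bool.andb_false_r; reflexivity. }
  rewrite <- (mulx1 _ (mul (star (Sg n)) (Sg m))), <- (Hsum n Hn), mul_sumA_l.
  apply sumA_ext. intros j _.
  rewrite Nat.mul_comm, Nat.Div0.mod_mul, Nat.div_mul by lia. simpl (0 =? 0)%nat. rewrite Bool.andb_true_r.
  rewrite Nat.mul_comm.
  rewrite <- !mulA.
  rewrite (cov' S Sg U Hcov m j) by exact Hm.
  rewrite (mulA _ (Sg m) (Sg n)), <- Hc, <- mulA.
  rewrite (Gform S Sg U HS1 Hiso HU Hcov Hsum) by exact Hn.
  reflexivity.
Qed.

Lemma dir2 n m : S n -> S m -> mul (star (Sg n)) (Sg m) = RHS n m ->
  mul (Sg n) (Sg m) = mul (Sg m) (Sg n).
Proof.
  intros Hn Hm Hf. pose proof (HS1 n Hn). pose proof (HS1 m Hm).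
  set (X := mul (Sg n) (Sg m)). set (Y := mul (Sg m) (Sg n)).
  assert (HXX : mul (star X) X = one).
  { unfold X. rewrite starM, <- mulA, (mulA _ (star (Sg n))), (Hiso n Hn), mul1x. apply (Hiso m Hm). }
  assert (HYY : mul (star Y) Y = one).
  { unfold Y. rewrite starM, <- mulA, (mulA _ (star (Sg m))), (Hiso m Hm), mul1x. apply (Hiso n Hn). }
  assert (HXY : mul (star X) Y = one).
  { unfold X, Y. rewrite starM, <- mulA, (mulA _ (star (Sg n))), Hf. unfold RHS.
    replace (n * m)%nat with (Datatypes.S (n * m - 1)) by nia. simpl seq. simpl filter.
    rewrite !Nat.Div0.mod_0_l. simpl. rewrite ?Nat.Div0.div_0_l. simpl pw. rewrite !mul1x, !mulx1.
    rewrite mulDl, mulDr.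
    rewrite <- mulA, (mulA _ (star (Sg m))), (Hiso m Hm), mul1x, (Hiso n Hn).
    rewrite mul_sumA_r, mul_sumA_l, sumA_zero, addx0; [reflexivity|].
    intros l Hl. apply filter_In in Hl. destruct Hl as [Hl Hp]. apply in_seq in Hl.
    apply andb_prop in Hp. destruct Hp as [Hp1 Hp2]. apply Nat.eqb_eq in Hp1.
    rewrite <- !mulA.
    rewrite (Gform S Sg U HS1 Hiso HU Hcov Hsum) by exact Hm.
    destruct (Nat.eqb_spec ((l / n) mod m) 0) as [E|E]; [|reflexivity].
    exfalso.
    pose proof (Nat.div_mod_eq l n) as D1. pose proof (Nat.div_mod_eq (l / n) m) as D2.
    rewrite Hp1 in D1. rewrite E in D2. set (a := (l / n)%nat) in *. set (q := (a / m)%nat) in *. clearbody a q. subst. destruct q; nia. }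
  assert (HYX : mul (star Y) X = one).
  { rewrite <- (starK _ X), <- starM, HXY. apply star_one. }
  assert (Hz : add X (opp Y) = zero).
  { apply cstar_zero. rewrite starD, star_opp, mulDl, !mulDr, mulNx, !mulxN, mulNx, oppK.
    rewrite HXX, HXY, HYX, HYY. rewrite addxN, add0x. apply addNx. }
  apply opp_unique in Hz. rewrite <- (oppK X), <- Hz, oppK. reflexivity.
Qed.
End Main2.

Theorem proposition4p7 (B : CStarAlgebra) (S : nat -> Prop) (Sg : nat -> B) (U : B)
  (HS1 : forall n, S n -> (2 <= n)%nat)
  (HS2 : exists n, S n)
  (Hiso : forall n, S n -> isometry (Sg n))
  (HU : unitary U)
  (Hgen : generated_by U S Sg)
  (Hcov : forall n, S n -> mul (Sg n) U = mul (pw U n) (Sg n))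
  (Hsum : forall n, S n ->
     sumA (fun i => mul (mul (pw U i) (mul (Sg n) (star (Sg n)))) (pw (star U) i))
          (seq 0 n) = one) :
  (forall n m, S n -> S m -> mul (Sg n) (Sg m) = mul (Sg m) (Sg n)) <->
  (forall n m, S n -> S m ->
     mul (star (Sg n)) (Sg m) =
     sumA (fun l => mul (mul (pw U (l / n)) (mul (Sg m) (star (Sg n))))
                        (pw (star U) (l / m)))
          (filter (fun l => andb (Nat.eqb (l mod n) 0) (Nat.eqb (l mod m) 0))
                  (seq 0 (n * m)))).
Proof.
  split.
  - intros Hc n m Hn Hm. apply (dir1 S Sg U HS1 Hiso HU Hcov Hsum n m Hn Hm (Hc n m Hn Hm)).
  - intros Hf n m Hn Hm. apply (dir2 S Sg U HS1 Hiso HU Hcov Hsum n m Hn Hm (Hf n m Hn Hm)).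
Qed.
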